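(* Let $\mathcal I$ be the set of all infinitely divisible real random variables $X$ with $E[X^2]<\infty$. For every $\varepsilon\in(0,\frac{\sqrt2}{2})$, $$\inf_{X\in\mathcal I}P\left\{|X-E[X]|\le \varepsilon\sqrt{\mathrm{Var}(X)}\right\}=0.$$
   Context: A real random variable is infinitely divisible if for every $n\ge1$ its distribution equals that of a sum of $n$ i.i.d. random variables. *)

(* Defs.v *)
From HB Require Import structures.
From mathcomp Require Import all_boot all_order all_algebra.
From mathcomp Require Import all_classical all_reals all_analysis.
Set Implicit Arguments. Unset Strict Implicit. Unset Printing Implicit Defensive.
Import Order.TTheory GRing.Theory Num.Theory.
Import numFieldNormedType.Exports.
Local Open Scope classical_set_scope.
Local Open Scope ring_scope.

(* Mutual independence of a finite family (Y i)_{i < n} of real random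
   variables: the product rule holds for every choice of Borel sets
   (taking B i = setT recovers every finite subfamily). *)
Definition mutually_independent d (T : measurableType d) (R : realType)
  (P : probability T R) (n : nat) (Y : 'I_n -> {RV P >-> R}) : Prop :=
  forall B : 'I_n -> set R, (forall i, measurable (B i)) ->
    fine (P (\bigcap_(i in [set: 'I_n]) (Y i @^-1` B i))) =
    \prod_(i < n) fine (P (Y i @^-1` B i)).

Definition identically_distributed d (T : measurableType d) (R : realType)
  (P : probability T R) (n : nat) (Y : 'I_n -> {RV P >-> R}) : Prop :=
  forall i j : 'I_n, forall A : set R, measurable A ->
    distribution P (Y i) A = distribution P (Y j) A.

Definition infinitely_divisible d (T : measurableType d) (R : realType)
  (P : probability T R) (X : {RV P >-> R}) : Prop :=
  forall n : nat, (0 < n)%N ->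
    exists (d' : measure_display) (T' : measurableType d')
           (P' : probability T' R) (Y : 'I_n -> {RV P' >-> R}),
      mutually_independent Y /\ identically_distributed Y /\
      forall A : set R, measurable A ->
        P' [set w | A (\sum_(i < n) Y i w)] = distribution P X A.

(* Main.v *)
Require Import Defs.
From HB Require Import structures.
From mathcomp Require Import all_boot all_order all_algebra.
From mathcomp Require Import all_classical all_reals all_analysis.
From mathcomp Require Import ring lra.
Import Order.TTheory GRing.Theory Num.Theory.
Import numFieldNormedType.Exports.
Local Open Scope classical_set_scope.
Local Open Scope ring_scope.

Section esum_extra.
Context {R : realType}.
Local Open Scope ereal_scope.

Lemma esumZl (T : choiceType) (S : set T) (a : T -> \bar R) (c : R) :
  (0 <= c)%R -> (forall x, 0 <= a x) ->
  \esum_(i in S) (c%:E * a i) = c%:E * \esum_(i in S) a i.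
Proof.
move=> c0 a0; rewrite /esum -ereal_supZl //; last first.
  by apply/set0P; exists 0; exists set0; [exact: fsets_set0 | rewrite fsbig_set0].
congr ereal_sup; apply/seteqP; split => x /=.
  by move=> [A FA <-]; exists (\sum_(x \in A) a x); [exists A | rewrite ge0_mule_fsumr].
by move=> [y [A FA <-] <-]; exists A => //; rewrite ge0_mule_fsumr.
Qed.

Lemma esum_shift (a : nat -> \bar R) : (forall k, 0 <= a k) -> a 0%N = 0 ->
  \esum_(k in [set: nat]) a k = \esum_(k in [set: nat]) a k.+1.
Proof.
move=> a0 a00; rewrite (esumID [set 0%N]) // setTI esum_set1 // a00 add0e.
rewrite (_ : _ `&` _ = succn @` [set: nat]); last first.
  apply/seteqP; split => [[|k]|] /=; first by move=> [_ /(_ erefl)].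
    by move=> _; exists k.
  by move=> _ [k _ <-].
by rewrite esum_image // => x y _ _ [].
Qed.

End esum_extra.

Lemma mfun_nat (d : measure_display) (T' : measurableType d) (f : nat -> T') :
  measurable_fun setT f.
Proof. by move=> _ B _. Qed.

Section poisson_facts.
Context {R : realType} (r : R) (r0 : 0 < r).
Local Notation p := (poisson_pmf r).

Lemma pmfS k : k.+1%:R * p k.+1 = r * p k.
Proof.
rewrite /poisson_pmf r0 factS natrM exprS.
have h1 : (k.+1%:R : R) != 0 by rewrite pnatr_eq0.
have h2 : (k`!%:R : R) != 0 by rewrite pnatr_eq0 -lt0n fact_gt0.
rewrite -!mulrA mulrCA; congr (r * _).
by rewrite mulrCA; congr (_ * _); rewrite mulrA invfM mulrA mulfV // mul1r.
Qed.

Lemma pmf_sum1 : \esum_(k in [set: nat]) (p k)%:E = 1%E.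
Proof.
have h : poisson_prob r 0%N [set: nat] = 1%E by exact: probability_setT.
by rewrite -h /poisson_prob r0.
Qed.

Lemma mom1 : \esum_(k in [set: nat]) (k%:R * p k)%:E = r%:E.
Proof.
rewrite esum_shift; last by rewrite mul0r.
  under eq_esum do rewrite pmfS EFinM.
  by rewrite esumZl ?ltW // ?pmf_sum1 ?mule1 // => k; rewrite lee_fin poisson_pmf_ge0.
by move=> k; rewrite lee_fin mulr_ge0 ?poisson_pmf_ge0.
Qed.

Lemma mom2 : \esum_(k in [set: nat]) (k%:R ^+ 2 * p k)%:E = (r * (r + 1))%:E.
Proof.
rewrite esum_shift; last by rewrite expr2 !mul0r.
  under eq_esum => k _.
    rewrite expr2 -mulrA pmfS mulrCA -natr1 mulrDl mul1r EFinM EFinD.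
    over.
  rewrite esumZl ?ltW //; last first.
    by move=> k; rewrite adde_ge0 // lee_fin ?mulr_ge0 ?poisson_pmf_ge0.
  rewrite esumD; last 2 first.
  - by move=> k _; rewrite lee_fin ?mulr_ge0 ?poisson_pmf_ge0.
  - by move=> k _; rewrite lee_fin ?mulr_ge0 ?poisson_pmf_ge0.
  by rewrite mom1 pmf_sum1 -EFinD EFinM.
by move=> k; rewrite lee_fin mulr_ge0 ?poisson_pmf_ge0 ?sqr_ge0.
Qed.

Lemma int_poi (f : nat -> \bar R) : (forall k, (0 <= f k)%E) ->
  (\int[poisson_prob r 0%N]_k f k = \esum_(k in [set: nat]) ((p k)%:E * f k))%E.
Proof.
move=> f0.
pose m_ k := mscale (NngNum (poisson_pmf_ge0 r k)) (@dirac _ nat k R).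
transitivity (\int[mseries m_ 0]_x f x)%E.
  congr (integral _ _ _); apply/funext => A.
  rewrite /poisson_prob r0 /mseries esum_mkcond -nneseries_esumT; last first.
    by move=> k; case: ifP => // _; rewrite lee_fin poisson_pmf_ge0.
  apply: eq_eseriesr => k _; rewrite /m_ /= /mscale /= diracE.
  by case: (k \in A); rewrite ?mule1 ?mule0.
rewrite (@ge0_integral_measure_series _ _ R m_ setT) //.
rewrite nneseries_esumT; last first.
  move=> k; apply: integral_ge0 => x _; exact: f0.
apply: eq_esum => k _.
rewrite ge0_integral_mscale //.
by rewrite integral_dirac // diracT mul1e.
Qed.

Lemma var_poi : \esum_(k in [set: nat])
  ((p k)%:E * ((k%:R - r) * (k%:R - r))%:E)%E = r%:E.
Proof.
have h : (\esum_(k in [set: nat]) ((p k)%:E * ((k%:R - r) * (k%:R - r))%:E)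
   + (2 * r * r)%:E = (r * (r + 1) + r * r)%:E)%E.
  have -> : ((2 * r * r)%:E = (2 * r)%:E * \esum_(k in [set: nat]) (k%:R * p k)%:E)%E.
    by rewrite mom1 -EFinM.
  rewrite -esumZl; last 2 first.
  - by rewrite mulr_ge0 // ltW.
  - by move=> k; rewrite lee_fin mulr_ge0 ?poisson_pmf_ge0.
  rewrite -esumD; last 2 first.
  - by move=> k _; rewrite -EFinM lee_fin mulr_ge0 ?poisson_pmf_ge0 // -expr2 sqr_ge0.
  - by move=> k _; rewrite -EFinM lee_fin mulr_ge0 ?mulr_ge0 ?poisson_pmf_ge0 // ltW.
  transitivity (\esum_(k in [set: nat]) ((k%:R ^+ 2 * p k)%:E + (r * r)%:E * (p k)%:E))%E.
    by apply: eq_esum => k _; rewrite -!EFinM -EFinD; congr EFin; ring.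
  rewrite esumD; last 2 first.
  - by move=> k _; rewrite lee_fin mulr_ge0 ?poisson_pmf_ge0 ?sqr_ge0.
  - by move=> k _; rewrite -EFinM lee_fin mulr_ge0 ?mulr_ge0 ?poisson_pmf_ge0 // ltW.
  rewrite esumZl; last 2 first.
  - by rewrite mulr_ge0 // ltW.
  - by move=> k; rewrite lee_fin poisson_pmf_ge0.
  by rewrite mom2 pmf_sum1 mule1 -EFinD.
have V0 : (0 <= \esum_(k in [set: nat]) ((p k)%:E * ((k%:R - r) * (k%:R - r))%:E))%E.
  by apply: esum_ge0 => k _; rewrite -EFinM lee_fin mulr_ge0 ?poisson_pmf_ge0 // -expr2 sqr_ge0.
move: h V0; case: (\esum_(k in _) _) => [v| |] //= h _.
move: h => /eqP; rewrite -EFinD eqe => /eqP h; congr EFin.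
have -> : v = v + 2 * r * r - 2 * r * r by ring.
by rewrite h; ring.
Qed.

End poisson_facts.


HB.instance Definition _ := isPointed.Build (seq nat) [::].
HB.instance Definition _ := @isMeasurable.Build default_measure_display
  (seq nat) discrete_measurable discrete_measurable0
  discrete_measurableC discrete_measurableU.

Definition wt {R : realType} (r : R) (s : seq nat) : R :=
  \prod_(x <- s) poisson_pmf r x.

Definition boxset n (B : nat -> set nat) : set (seq nat) :=
  [set s | size s = n /\ forall i, (i < n)%N -> B i (nth 0%N s i)].

Definition sumset n m : set (seq nat) := [set s | size s = n /\ sumn s = m].

Lemma wt_ge0 {R : realType} (r : R) s : 0 <= wt r s.
Proof. by rewrite /wt; apply: prodr_ge0 => x _; exact: poisson_pmf_ge0. Qed.

Lemma binom_conv_ {R : realType} (a b : R) m :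
  (\sum_(k < m.+1) (a ^+ k / k`!%:R * (b ^+ (m - k) / (m - k)`!%:R)) =
  (a + b) ^+ m / m`!%:R)%R.
Proof.
rewrite addrC exprDn mulr_suml; apply: eq_bigr => -[k /=]; rewrite ltnS => km _.
have := bin_fact km => /(congr1 (fun x => x%:R : R)); rewrite !natrM => hf.
have hC : ('C(m, k)%:R : R) != 0%R by rewrite pnatr_eq0 -lt0n bin_gt0.
have h1 : (k`!%:R : R) != 0%R by rewrite pnatr_eq0 -lt0n fact_gt0.
have h2 : ((m - k)`!%:R : R) != 0%R by rewrite pnatr_eq0 -lt0n fact_gt0.
rewrite -hf -[_ *+ 'C(m, k)]mulr_natr.
by field; rewrite hC h1 h2.
Qed.


Section seq_facts.
Context {R : realType} (r : R) (r0 : 0 < r).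
Local Notation p := (poisson_pmf r).
Local Open Scope ereal_scope.

Lemma esum_p_bnd (B : set nat) :
  0 <= \esum_(k in B) (p k)%:E <= 1.
Proof.
apply/andP; split; first by apply: esum_ge0 => k _; rewrite lee_fin poisson_pmf_ge0.
rewrite -(pmf_sum1 r r0) esum_mkcond; apply: le_esum => k _.
by case: ifP => // _; rewrite lee_fin poisson_pmf_ge0.
Qed.

Lemma esum_p_fin (B : set nat) : \esum_(k in B) (p k)%:E \is a fin_num.
Proof.
have /andP[h0 h1] := esum_p_bnd B.
by rewrite ge0_fin_numE // (le_lt_trans h1) // ltey.
Qed.

Lemma box n B : \esum_(s in boxset n B) (wt r s)%:E =
  \prod_(i < n) \esum_(k in B i) (p k)%:E.
Proof.
elim: n B => [|n IH] B.
  rewrite big_ord0 (_ : boxset 0 B = [set [::]]); last first.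
    apply/seteqP; split => [s [/size0nil -> _]|s ->] //=.
  by rewrite esum_set1 /wt ?big_nil // lee_fin wt_ge0.
rewrite (_ : boxset n.+1 B = (fun kt : nat * seq nat => kt.1 :: kt.2) @`
   (B 0%N `*` boxset n (fun i => B i.+1))); last first.
  apply/seteqP; split => [[|x t] [//= [sz] H]|s [[k t] [/= Bk [sz Ht]] <-]].
    exists (x, t) => //; split; first exact: (H 0%N).
    by split => // i ilt; exact: (H i.+1).
  by split => [/=|[|i] //=]; [rewrite sz | move=> ilt; exact: Ht].
rewrite esum_image; last by move=> [a b] [c d] _ _ /= [-> ->].
transitivity (\esum_(k in B 0%N) \esum_(t in boxset n (fun i => B i.+1))
    ((p k)%:E * (wt r t)%:E)).
  rewrite esum_esum; last by move=> i j _ _; rewrite -EFinM lee_fin mulr_ge0 ?wt_ge0 ?poisson_pmf_ge0.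
  by apply: eq_esum => -[k t] _ /=; rewrite /wt big_cons EFinM.
under eq_esum => k _.
  rewrite esumZl; [|exact: poisson_pmf_ge0|by move=> t; rewrite lee_fin wt_ge0].
  rewrite IH; over.
set C := \prod_(i < n) _.
have Cfin : C \is a fin_num by apply: prode_fin_num => i _; exact: esum_p_fin.
have C0 : 0 <= C by apply: prode_ge0 => i _; have /andP[] := esum_p_bnd (B i.+1).
rewrite -(fineK Cfin).
under eq_esum => k _ do rewrite muleC.
rewrite esumZl ?fine_ge0 //; last by move=> k; rewrite lee_fin poisson_pmf_ge0.
by rewrite fineK // big_ord_recl muleC.
Qed.

Lemma box1 n i (C : set nat) : (i < n)%N ->
  \esum_(s in [set s | size s = n /\ C (nth 0%N s i)]) (wt r s)%:E =
  \esum_(k in C) (p k)%:E.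
Proof.
move=> ilt.
rewrite (_ : [set s | _] = boxset n (fun j => if j == i then C else setT)); last first.
  apply/seteqP; split => s [sz H]; split => //.
    by move=> j jlt; case: eqP => // ->.
  by have := H i ilt; rewrite eqxx.
rewrite box (bigD1 (Ordinal ilt)) //= eqxx big1 ?mule1 // => j /negPf.
move=> ji; rewrite (_ : (j == i :> nat) = false) ?(pmf_sum1 r r0) //.
Qed.

Lemma sumlaw n m : \esum_(s in sumset n.+1 m) (wt r s)%:E =
  (poisson_pmf (n.+1%:R * r) m)%:E.
Proof.
elim: n m => [|n IH] m.
  rewrite (_ : sumset 1 m = [set [:: m]]); last first.
    apply/seteqP; split => [[|x [|y t]] [] //= _|s ->]; last by split => //=; rewrite addn0.
    by rewrite addn0 => ->.
  by rewrite esum_set1 ?lee_fin ?wt_ge0 // /wt big_cons big_nil mulr1 mul1r.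
rewrite (_ : sumset n.+2 m = (fun kt : nat * seq nat => kt.1 :: kt.2) @`
   (`I_m.+1 `*`` (fun k => sumset n.+1 (m - k)))); last first.
  apply/seteqP; split => [[|x t] [//= [sz] H]|s [[k t] [/= km [sz Ht]] <-]].
    exists (x, t) => //=; split; first by rewrite /= ltnS -H leq_addr.
    by split => //; rewrite -H addKn.
  by split; rewrite /= ?sz // Ht subnKC // -ltnS.
rewrite esum_image; last by move=> [a b] [c d] _ _ /= [-> ->].
transitivity (\esum_(k in `I_m.+1) \esum_(t in sumset n.+1 (m - k))
    ((p k)%:E * (wt r t)%:E)).
  rewrite esum_esum; last by move=> i j _ _; rewrite -EFinM lee_fin mulr_ge0 ?wt_ge0 ?poisson_pmf_ge0.
  by apply: eq_esum => -[k t] _ /=; rewrite /wt big_cons EFinM.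
under eq_esum => k _.
  rewrite esumZl; [|exact: poisson_pmf_ge0|by move=> t; rewrite lee_fin wt_ge0].
  rewrite IH; over.
rewrite esum_fset ?finite_II //; last by move=> k _; rewrite -EFinM lee_fin mulr_ge0 ?poisson_pmf_ge0.
rewrite -fsbig_ord; under eq_bigr do rewrite -EFinM.
rewrite sumEFin; congr EFin.
have r1 : (0 < n.+1%:R * r)%R by rewrite mulr_gt0.
have r2 : (0 < n.+2%:R * r)%R by rewrite mulr_gt0.
rewrite /poisson_pmf r0 r1 r2.
under eq_bigr => k _.
  have -> : forall x1 x2 x3 x4 x5 x6 : R, (x1 * x2 * x3 * (x4 * x5 * x6) = (x3 * x6) * (x1 * x2 * (x4 * x5)))%R.
    by move=> *; ring.
  over.
rewrite -mulr_sumr binom_conv_ -expRD mulrC.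
have h2 : (n.+2%:R * r = r + n.+1%:R * r)%R.
  by rewrite -[n.+2]addn1 natrD mulrDl mul1r addrC.
by rewrite h2 opprD.
Qed.

Lemma sumA n (A : set nat) :
  \esum_(s in [set s | size s = n.+1 /\ A (sumn s)]) (wt r s)%:E =
  \esum_(m in A) (poisson_pmf (n.+1%:R * r) m)%:E.
Proof.
rewrite (_ : [set s | _] = \bigcup_(m in A) sumset n.+1 m); last first.
  apply/seteqP; split => [s [sz As]|s [m Am [sz hs]]]; first by exists (sumn s).
  by split => //; rewrite hs.
rewrite esum_bigcupT; last by move=> s; rewrite lee_fin wt_ge0.
  by apply: eq_esum => m _; rewrite sumlaw.
by move=> i j _ _ [s [[_ <-] [_ <-]]].
Qed.

End seq_facts.

Definition rate {R : realType} (m : nat) : R := (m.+1%:R * 2)^-1.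

Lemma rate_gt0 {R : realType} m : 0 < @rate R m.
Proof. by rewrite invr_gt0 mulr_gt0. Qed.

Definition mu (R : realType) (m : nat) (A : set (seq nat)) : \bar R :=
  \esum_(s in A `&` [set s | size s = m.+1]) (wt (rate m) s)%:E.

Section mu_measure.
Context {R : realType} (m : nat).
Local Open Scope ereal_scope.
Local Notation mu := (mu R m).

Let mu0 : mu set0 = 0.
Proof. by rewrite /mu set0I esum_set0. Qed.

Let mu_ge0 A : 0 <= mu A.
Proof. by apply: esum_ge0 => s _; rewrite lee_fin wt_ge0. Qed.

Let mu_sigma_additive : semi_sigma_additive mu.
Proof.
move=> F mF tF mUF; rewrite /mu; apply: cvg_toP.
  apply: ereal_nondecreasing_is_cvgn => a b ab.
  apply: lee_sum_nneg_natr => // n _ _.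
  by apply: esum_ge0 => s _; rewrite lee_fin wt_ge0.
rewrite setI_bigcupl nneseries_sum_bigcup //; last by move=> s; rewrite lee_fin wt_ge0.
exact: trivIset_setIr.
Qed.

HB.instance Definition _ := isMeasure.Build _ _ _ mu
  mu0 mu_ge0 mu_sigma_additive.

Let mu_setT : mu [set: seq nat] = 1.
Proof.
rewrite /mu setTI (_ : [set s | _] = boxset m.+1 (fun _ => setT)); last first.
  by apply/seteqP; split => s [].
rewrite box ?rate_gt0 // big1 // => i _.
exact: pmf_sum1 (rate_gt0 m).
Qed.

HB.instance Definition _ :=
  @Measure_isProbability.Build _ _ R mu mu_setT.

End mu_measure.

Definition Yf {R : realType} (i : nat) (s : seq nat) : R := (nth 0%N s i)%:R.
Definition Xf {R : realType} (k : nat) : R := k%:R.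

Lemma mfun_seq (d : measure_display) (T' : measurableType d) (f : seq nat -> T') :
  measurable_fun setT f.
Proof. by move=> _ B _. Qed.

HB.instance Definition _ (R : realType) (i : nat) :=
  isMeasurableFun.Build _ _ (seq nat) R (Yf i) (@mfun_seq _ _ (Yf i)).
HB.instance Definition _ (R : realType) :=
  isMeasurableFun.Build _ _ nat R Xf (@mfun_nat _ _ Xf).

Lemma sum_nth {R : realType} (s : seq nat) n : size s = n ->
  \sum_(i < n) ((nth 0%N s i)%:R : R) = (sumn s)%:R.
Proof. by move=> <-; rewrite sumnE (big_nth 0%N) big_mkord natr_sum. Qed.

Lemma fine_prod {R : realType} n (E : 'I_n -> \bar R) :
  (forall i, E i \is a fin_num) ->
  fine (\prod_(i < n) E i)%E = \prod_(i < n) fine (E i).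
Proof.
move=> Ef; rewrite (eq_bigr (fun i => (fine (E i))%:E)) ?prodEFin //.
by move=> i _; rewrite fineK.
Qed.

Lemma mu_pre {R : realType} m (i : 'I_m.+1) (A : set R) :
  mu R m (Yf i @^-1` A) = \esum_(k in [set k | A k%:R]) (poisson_pmf (rate m) k)%:E.
Proof. by rewrite /mu setIC; exact: (@box1 _ (rate m) (rate_gt0 m) m.+1 i [set k | A k%:R] (ltn_ord i)). Qed.

Lemma ID_X (R : realType) :
  infinitely_divisible (P := poisson_prob (2^-1 : R) 0%N) (Xf : {mfun nat >-> R}).
Proof.
case=> [//|m] _.
exists default_measure_display, (seq nat), (mu R m : probability _ R).
exists (fun i : 'I_m.+1 => (Yf i : {mfun seq nat >-> R})).
split; [|split].
- move=> B mB.
  under eq_bigr => i _ do rewrite /= mu_pre.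
  rewrite -fine_prod; last by move=> i; apply: esum_p_fin; exact: rate_gt0.
  rewrite /mu /=.
  transitivity (fine (\esum_(s in boxset m.+1 (fun j k => forall i : 'I_m.+1, (i : nat) = j -> B i k%:R)) (@wt R (rate m) s)%:E)).
    congr (fine (esum _ _)); apply/seteqP; split => s.
      move=> [H sz]; split => // j jlt i ij.
      by have := H i I; rewrite /Yf /= ij.
    move=> [sz H]; split => // i _.
    by rewrite /= /Yf; exact: (H i (ltn_ord i) i erefl).

  rewrite box ?rate_gt0 //; congr fine; apply: eq_bigr => i _.
  congr esum; apply/seteqP; split => k /=.
    by move=> /(_ i erefl).
  by move=> h i' /val_inj ->.
- by move=> i j A mA; rewrite /distribution /pushforward /= !mu_pre.
- move=> A mA.
  rewrite /= /mu (_ : _ `&` _ = [set s | size s = m.+1 /\ [set k | A k%:R] (sumn s)]); last first.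
    apply/seteqP; split => s /= [H sz]; split => //.
      by rewrite /= -(sum_nth s m.+1 sz).
    by rewrite /Yf (sum_nth s m.+1 H).
  rewrite sumA ?rate_gt0 // /distribution /pushforward /poisson_prob.
  have h2 : 0 < (2^-1 : R) by rewrite invr_gt0.
  rewrite h2 /rate invfM mulrA mulfV ?mul1r //.
Qed.

Theorem proposition2p2 (R : realType) (eps : R) :
  0 < eps -> eps < Num.sqrt 2 / 2 ->
  inf [set r : R | exists (d : measure_display) (T : measurableType d)
                          (P : probability T R) (X : {RV P >-> R}),
         ('E_P[fun w => (X w ^+ 2)%R] < +oo)%E /\
         infinitely_divisible X /\
         r = fine (P [set w | (`|(X w - fine ('E_P[X]))%R|%R
                              <= eps * Num.sqrt (fine 'V_P[X]))%R])] = 0.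
Proof.
move=> e0 elt.
set S := [set r : R | _].
have h2 : 0 < (2^-1 : R) by rewrite invr_gt0.
pose P := poisson_prob (2^-1 : R) 0%N.
have EX : ('E_P[Xf] = (2^-1)%:E)%E.
  rewrite unlock int_poi //; last by move=> k; rewrite lee_fin /Xf.
  under eq_esum do rewrite -EFinM mulrC.
  exact: mom1.
have EX2 : ('E_P[fun w => (Xf w ^+ 2)%R] = (2^-1 * (2^-1 + 1))%:E)%E.
  rewrite unlock int_poi //; last by move=> k; rewrite lee_fin sqr_ge0.
  under eq_esum do rewrite -EFinM mulrC.
  exact: mom2.
have VX : ('V_P[Xf] = (2^-1)%:E)%E.
  rewrite /variance unlock EX /= unlock int_poi //; last first.
    by move=> k; rewrite lee_fin /= -expr2 sqr_ge0.
  exact: var_poi.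
have S0 : S 0.
  exists default_measure_display, nat, P, (Xf : {mfun nat >-> R}).
  split; first by rewrite EX2 ltry.
  split; first exact: ID_X.
  rewrite EX VX /=.
  set s := Num.sqrt (2^-1 : R).
  have hs : Num.sqrt 2 * s = 1.
    by rewrite -sqrtrM ?ler0n // mulfV ?pnatr_eq0 // sqrtr1.
  have s0 : 0 < s by rewrite sqrtr_gt0.
  have hlt : eps * s < 2^-1.
    apply: (lt_le_trans (y := Num.sqrt 2 / 2 * s)); first by rewrite ltr_pM2r.
    by rewrite mulrAC hs mul1r.
  rewrite (_ : [set w | _] = set0) ?measure0 //.
  apply/seteqP; split => // k /= H.
  suff : 2^-1 <= eps * s by rewrite leNgt hlt.
  apply: le_trans H.
  case: k => [|k].
    by rewrite /Xf sub0r normrN ger0_norm // ltW.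
  apply: le_trans (ler_norm _).
  have hk : 1 <= (k.+1)%:R :> R by rewrite ler1n.
  rewrite /Xf lerBrDr; lra.
have lb : forall x, S x -> 0 <= x.
  move=> x [d [T [P' [X [_ [_ ->]]]]]]; apply: fine_ge0; exact: measure_ge0.
have hl : has_lbound S by exists 0 => x /lb.
apply/eqP; rewrite eq_le; apply/andP; split.
  exact: (ge_inf hl S0).
by apply: lb_le_inf; [exists 0 | move=> x /lb].
Qed.
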